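(* Let $G\le\mathrm{O}(d)$ have closed orbits and let $z_1,\ldots,z_n\in\mathbb{R}^d$. Then the max filter bank $\Phi:\mathbb{R}^d/G\to\mathbb{R}^n$, $\Phi([x])=(\langle\!\langle[z_i],[x]\rangle\!\rangle)_{i=1}^n$, satisfies $$\sup_{\substack{[x],[y]\in\mathbb{R}^d/G\\ [x]\ne[y]}}\frac{\|\Phi([x])-\Phi([y])\|}{d([x],[y])}\le\sup_{g_1,\ldots,g_n\in G}\big\|[\,g_1z_1\ \cdots\ g_nz_n\,]\big\|_{2\to2}.$$ Moreover, equality holds if $-\mathrm{id}\in G$.
   Context: For $x\in\mathbb{R}^d$, $[x]:=\{gx:g\in G\}$; $\mathbb{R}^d/G$ is the set of orbits with quotient metric $d([x],[y]):=\inf_{p\in[x],q\in[y]}\|p-q\|$. Max filtering: $\langle\!\langle[x],[y]\rangle\!\rangle:=\sup_{p\in[x],q\in[y]}\langle p,q\rangle$. $[\,g_1z_1\ \cdots\ g_nz_n\,]$ is the $d\times n$ matrix with columns $g_iz_i$ and $\|\cdot\|_{2\to2}$ is the spectral norm. *)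

(* Defs.v *)
From HB Require Import structures.
From mathcomp Require Import all_boot all_order all_algebra.
From mathcomp Require Import all_classical all_reals ereal.
Set Implicit Arguments. Unset Strict Implicit. Unset Printing Implicit Defensive.
Import Order.TTheory GRing.Theory Num.Theory.
Local Open Scope ring_scope.
Local Open Scope classical_set_scope.

Section MaxFilter.
Variable R : realType.

Definition dotv (d : nat) (u v : 'cV[R]_d) : R := \sum_(i < d) u i 0 * v i 0.
Definition enorm (d : nat) (u : 'cV[R]_d) : R := Num.sqrt (dotv u u).

Definition is_subgroup_O (d : nat) (G : set 'M[R]_d) : Prop :=
  [/\ G 1%:M,
      (forall g h, G g -> G h -> G (g *m h)),
      (forall g, G g -> G (invmx g)) &
      (forall g, G g -> g^T *m g = 1%:M)].

Definition orbit (d : nat) (G : set 'M[R]_d) (x : 'cV[R]_d) : set 'cV[R]_d :=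
  [set p | exists2 g, G g & p = g *m x].

Definition eclosed (d : nat) (S : set 'cV[R]_d) : Prop :=
  forall y, (forall e : R, 0 < e -> exists2 p, S p & enorm (p - y) < e) -> S y.

Definition closed_orbits (d : nat) (G : set 'M[R]_d) : Prop :=
  forall x, eclosed (orbit G x).

Definition qdist (d : nat) (G : set 'M[R]_d) (x y : 'cV[R]_d) : R :=
  inf [set enorm (p - q) | p in orbit G x & q in orbit G y].

Definition maxfilt (d : nat) (G : set 'M[R]_d) (x y : 'cV[R]_d) : R :=
  sup [set dotv p q | p in orbit G x & q in orbit G y].

Definition Phi (d n : nat) (G : set 'M[R]_d) (z : 'I_n -> 'cV[R]_d)
  (x : 'cV[R]_d) : 'cV[R]_n := \col_(i < n) maxfilt G (z i) x.

Definition opnorm (m n : nat) (A : 'M[R]_(m, n)) : R :=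
  sup [set enorm (A *m v) | v in [set v : 'cV[R]_n | enorm v <= 1]].

Definition colmat (d n : nat) (g : 'I_n -> 'M[R]_d) (z : 'I_n -> 'cV[R]_d)
  : 'M[R]_(d, n) := \matrix_(i < d, j < n) (g j *m z j) i 0.

Definition lip_Phi (d n : nat) (G : set 'M[R]_d) (z : 'I_n -> 'cV[R]_d) : \bar R :=
  ereal_sup [set r | exists x y : 'cV[R]_d, orbit G x <> orbit G y /\
     r = ((enorm (Phi G z x - Phi G z y)) / qdist G x y)%:E].

Definition sup_colnorm (d n : nat) (G : set 'M[R]_d) (z : 'I_n -> 'cV[R]_d) : \bar R :=
  ereal_sup [set (opnorm (colmat g z))%:E
            | g in [set g : 'I_n -> 'M[R]_d | forall i, G (g i)]].

End MaxFilter.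

(* Main.v *)
Require Import Defs.
From HB Require Import structures.
From mathcomp Require Import all_boot all_order all_algebra.
From mathcomp Require Import all_classical all_reals ereal.
From mathcomp Require Import ring lra.
Set Implicit Arguments. Unset Strict Implicit. Unset Printing Implicit Defensive.
Import Order.TTheory GRing.Theory Num.Theory.
Local Open Scope ring_scope.
Local Open Scope classical_set_scope.

Section H.
Variable R : realType.
Implicit Types (d n : nat).

Lemma dotv_mx d (u v : 'cV[R]_d) : dotv u v = (u^T *m v) 0 0.
Proof. by rewrite /dotv mxE; apply: eq_bigr => i _; rewrite mxE. Qed.

Lemma dotvC d (u v : 'cV[R]_d) : dotv u v = dotv v u.
Proof. by rewrite /dotv; apply: eq_bigr => i _; rewrite mulrC. Qed.

Lemma dotvDl d (u v w : 'cV[R]_d) : dotv (u + v) w = dotv u w + dotv v w.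
Proof. by rewrite /dotv -big_split; apply: eq_bigr => i _; rewrite mxE mulrDl. Qed.

Lemma dotvNl d (u w : 'cV[R]_d) : dotv (- u) w = - dotv u w.
Proof. by rewrite /dotv -sumrN; apply: eq_bigr => i _; rewrite mxE mulNr. Qed.

Lemma dotvZl d a (u w : 'cV[R]_d) : dotv (a *: u) w = a * dotv u w.
Proof. by rewrite /dotv mulr_sumr; apply: eq_bigr => i _; rewrite mxE mulrA. Qed.

Lemma dotvBl d (u v w : 'cV[R]_d) : dotv (u - v) w = dotv u w - dotv v w.
Proof. by rewrite dotvDl dotvNl. Qed.
Lemma dotvDr d (u v w : 'cV[R]_d) : dotv w (u + v) = dotv w u + dotv w v.
Proof. by rewrite !(dotvC w) dotvDl. Qed.
Lemma dotvBr d (u v w : 'cV[R]_d) : dotv w (u - v) = dotv w u - dotv w v.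
Proof. by rewrite !(dotvC w) dotvBl. Qed.
Lemma dotvNr d (u w : 'cV[R]_d) : dotv w (- u) = - dotv w u.
Proof. by rewrite !(dotvC w) dotvNl. Qed.
Lemma dotvZr d a (u w : 'cV[R]_d) : dotv w (a *: u) = a * dotv w u.
Proof. by rewrite !(dotvC w) dotvZl. Qed.

Lemma dotv_ge0 d (u : 'cV[R]_d) : 0 <= dotv u u.
Proof. by rewrite /dotv; apply: sumr_ge0 => i _; rewrite -expr2 sqr_ge0. Qed.

Lemma dotv0r d (u : 'cV[R]_d) : dotv u 0 = 0.
Proof. by rewrite /dotv big1 // => i _; rewrite mxE mulr0. Qed.

Lemma dotv_eq0 d (u : 'cV[R]_d) : dotv u u = 0 -> u = 0.
Proof.
move=> /eqP; rewrite /dotv psumr_eq0; last by move=> i _; rewrite -expr2 sqr_ge0.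
move=> /allP H; apply/matrixP => i j; rewrite (ord1 j) mxE.
have := H i (mem_index_enum _); rewrite mulf_eq0 orbb => /eqP ->. by [].
Qed.

Lemma enormE d (u : 'cV[R]_d) : enorm u ^+ 2 = dotv u u.
Proof. by rewrite /enorm sqr_sqrtr // dotv_ge0. Qed.

Lemma enorm_ge0 d (u : 'cV[R]_d) : 0 <= enorm u.
Proof. exact: sqrtr_ge0. Qed.

Lemma enorm_eq0 d (u : 'cV[R]_d) : enorm u = 0 -> u = 0.
Proof. by move=> h; apply: dotv_eq0; rewrite -enormE h expr0n. Qed.

Lemma dotv_mul d k (h : 'M[R]_(d, k)) a b : dotv (h *m a) b = dotv a (h^T *m b).
Proof. by rewrite !dotv_mx trmx_mul mulmxA. Qed.

Lemma dotv_orth d (g : 'M[R]_d) a b : g^T *m g = 1%:M -> dotv (g *m a) (g *m b) = dotv a b.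
Proof. by move=> H; rewrite dotv_mul mulmxA H mul1mx. Qed.

Lemma amgm d (u v : 'cV[R]_d) : 2 * dotv u v <= dotv u u + dotv v v /\ - (2 * dotv u v) <= dotv u u + dotv v v.
Proof.
have h1 := dotv_ge0 (u - v); have h2 := dotv_ge0 (u + v).
rewrite !(dotvBl, dotvBr, dotvDl, dotvDr) (dotvC v u) in h1 h2.
split; lra.
Qed.

Lemma quad (a b c : R) : 0 <= a -> 0 <= b ->
  (forall t, 0 <= a - 2 * t * c + t ^+ 2 * b) -> c ^+ 2 <= a * b.
Proof.
move=> ha hb H; have [b0|bp] := eqVneq b 0.
  have [c0|cn] := eqVneq c 0; first by rewrite c0 b0; lra.
  have := H ((a + 1) / (2 * c)); rewrite b0.
  have -> : 2 * ((a + 1) / (2 * c)) * c = a + 1.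
    by field.
  lra.
have bp' : 0 < b by rewrite lt_def bp hb.
have := H (c / b); set t := c / b => Ht.
have ct : c = b * t by rewrite /t mulrC divfK.
rewrite ct in Ht *; nra.
Qed.

Lemma CS d (u v : 'cV[R]_d) : dotv u v <= enorm u * enorm v.
Proof.
have h : (dotv u v) ^+ 2 <= dotv u u * dotv v v.
  apply: quad; try exact: dotv_ge0.
  move=> t; have := dotv_ge0 (u - t *: v).
  rewrite !(dotvBl, dotvBr, dotvZl, dotvZr) (dotvC v u); lra.
rewrite /enorm -sqrtrM ?dotv_ge0 //.
apply: le_trans (ler_norm _) _.
by rewrite -sqrtr_sqr ler_sqrt // mulr_ge0 ?dotv_ge0.
Qed.


Lemma enorm0 d : enorm (0 : 'cV[R]_d) = 0.
Proof. by rewrite /enorm dotv0r sqrtr0. Qed.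

Lemma enormZ d a (v : 'cV[R]_d) : enorm (a *: v) = `|a| * enorm v.
Proof.
by rewrite /enorm dotvZl dotvZr mulrA -expr2 sqrtrM ?sqr_ge0 // sqrtr_sqr.
Qed.

Lemma dotv1 d (v : 'cV[R]_d) : enorm v <= 1 -> dotv v v <= 1.
Proof. move=> h; rewrite -enormE; have := enorm_ge0 v; nra. Qed.

Definition opset m k (A : 'M[R]_(m, k)) :=
  [set enorm (A *m v) | v in [set v : 'cV[R]_k | enorm v <= 1]].

Lemma opnorm_bnd m k (A : 'M[R]_(m, k)) : exists K, forall v, enorm v <= 1 -> enorm (A *m v) <= K.
Proof.
pose r i := \col_(j < k) A i j.
pose B i := (dotv (r i) (r i) + 1) / 2.
exists (Num.sqrt (\sum_i B i ^+ 2)) => v hv.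
rewrite /enorm ler_sqrt; last by apply: sumr_ge0 => i _; rewrite sqr_ge0.
rewrite /dotv; apply: ler_sum => i _; rewrite -expr2.
have -> : (A *m v) i 0 = dotv (r i) v.
  by rewrite mxE /dotv; apply: eq_bigr => j _; rewrite mxE.
have [h1 h2] := amgm (r i) v; have h3 := dotv1 hv.
have h4 := dotv_ge0 (r i).
rewrite /B; nra.
Qed.

Lemma opset_has_sup m k (A : 'M[R]_(m, k)) : has_sup (opset A).
Proof.
split; first by exists (enorm (A *m 0)), 0 => //=; rewrite enorm0 ler01.
have [K HK] := opnorm_bnd A; exists K => x [v hv <-]; exact: HK.
Qed.

Lemma opnorm_ge0 m k (A : 'M[R]_(m, k)) : 0 <= opnorm A.
Proof.
have := sup_upper_bound (opset_has_sup A); apply.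
by exists 0; rewrite /= ?enorm0 ?ler01 // mulmx0 enorm0.
Qed.

Lemma opnorm_le m k (A : 'M[R]_(m, k)) L :
  (forall v, enorm v <= 1 -> enorm (A *m v) <= L) -> opnorm A <= L.
Proof.
move=> H; apply: ge_sup; first by exists (enorm (A *m 0)), 0 => //=; rewrite enorm0 ler01.
by move=> x [v hv <-]; exact: H.
Qed.

Lemma opnorm_ub m k (A : 'M[R]_(m, k)) v : enorm (A *m v) <= opnorm A * enorm v.
Proof.
have [v0|vn] := eqVneq v 0; first by rewrite v0 mulmx0 !enorm0 mulr0.
have ep : 0 < enorm v.
  rewrite lt_def enorm_ge0 andbT; apply/eqP => /enorm_eq0 h; by rewrite h eqxx in vn.
set w := (enorm v)^-1 *: v.
have hw : enorm w = 1 by rewrite /w enormZ ger0_norm ?invr_ge0 ?enorm_ge0 // mulVf // gt_eqF.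
have : enorm (A *m w) <= opnorm A.
  by apply: (sup_upper_bound (opset_has_sup A)); exists w => //=; rewrite hw.
rewrite /w -scalemxAr enormZ ger0_norm ?invr_ge0 ?enorm_ge0 //.
by rewrite mulrC -ler_pdivlMr ?invr_gt0 // invrK.
Qed.

Lemma opnorm_tr m k (A : 'M[R]_(m, k)) u : enorm (A^T *m u) <= opnorm A * enorm u.
Proof.
set x := enorm (A^T *m u).
have h : x ^+ 2 <= enorm u * (opnorm A * x).
  rewrite /x enormE dotv_mul trmxK.
  apply: le_trans (CS _ _) _; apply: ler_wpM2l; first exact: enorm_ge0.
  exact: opnorm_ub.
have hx : 0 <= x := enorm_ge0 _.
have := opnorm_ge0 A; have := enorm_ge0 u.
have [x0|xp] := eqVneq x 0; first by rewrite x0 => *; rewrite mulr_ge0.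
have xp' : 0 < x by rewrite lt_def xp hx.
nra.
Qed.


Lemma orth_inv d (g : 'M[R]_d) : g^T *m g = 1%:M -> invmx g = g^T.
Proof.
move=> H; have [_ u] := mulmx1_unit H; have H2 := mulmx1C H.
by rewrite -[invmx g]mulmx1 -H2 mulmxA mulVmx // mul1mx.
Qed.

Lemma orth_unit d (g : 'M[R]_d) : g^T *m g = 1%:M -> g \in unitmx.
Proof. by move=> H; have [_ u] := mulmx1_unit H. Qed.

Lemma orbit_mul d (G : set 'M[R]_d) g (x : 'cV[R]_d) : is_subgroup_O G -> G g ->
  Defs.orbit G (g *m x) = Defs.orbit G x.
Proof.
case=> G1 GM GV GO Gg; apply/seteqP; split => p [h Gh ->].
  by exists (h *m g); [exact: GM | rewrite mulmxA].
exists (h *m invmx g); first by apply: GM => //; apply: GV.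
by rewrite -mulmxA (mulmxA (invmx g)) mulVmx ?mul1mx // orth_unit // GO.
Qed.

Lemma orbit_self d (G : set 'M[R]_d) (x : 'cV[R]_d) : is_subgroup_O G -> Defs.orbit G x x.
Proof. by case=> G1 _ _ _; exists 1%:M => //; rewrite mul1mx. Qed.

Lemma mf_has_sup d (G : set 'M[R]_d) (z x : 'cV[R]_d) : is_subgroup_O G ->
  has_sup [set dotv p q | p in Defs.orbit G z & q in Defs.orbit G x].
Proof.
move=> HG; split.
  by exists (dotv z x), z; [exact: orbit_self| exists x => //; exact: orbit_self].
exists ((dotv z z + dotv x x) / 2) => r [p [a Ga ->] [q [b Gb ->] <-]].
have [h1 _] := amgm (a *m z) (b *m x).
case: HG => _ _ _ GO; rewrite !dotv_orth ?GO // in h1.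
lra.
Qed.

Lemma mf_ge d (G : set 'M[R]_d) (z x : 'cV[R]_d) a b : is_subgroup_O G -> G a -> G b ->
  dotv (a *m z) (b *m x) <= maxfilt G z x.
Proof.
move=> HG Ga Gb; apply: (sup_upper_bound (mf_has_sup z x HG)).
by exists (a *m z); [exists a | exists (b *m x) => //; exists b].
Qed.

Lemma mf_adh d (G : set 'M[R]_d) (z x : 'cV[R]_d) e : is_subgroup_O G -> 0 < e ->
  exists a b, [/\ G a, G b & maxfilt G z x - e < dotv (a *m z) (b *m x)].
Proof.
move=> HG ep; have [r [p [a Ga ->] [q [b Gb ->] <-]] h] := sup_adherent ep (mf_has_sup z x HG).
by exists a, b.
Qed.

Lemma Phi_orbit d n (G : set 'M[R]_d) (z : 'I_n -> 'cV[R]_d) g x :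
  is_subgroup_O G -> G g -> Phi G z (g *m x) = Phi G z x.
Proof. by move=> HG Gg; rewrite /Phi /maxfilt orbit_mul. Qed.

Lemma half d (G : set 'M[R]_d) (z x y : 'cV[R]_d) e : is_subgroup_O G -> 0 < e ->
  exists g, G g /\ maxfilt G z x - maxfilt G z y <= dotv (g *m z) (x - y) + e.
Proof.
move=> HG ep; have [a [b [Ga Gb h]]] := mf_adh z x HG ep.
have h2 := mf_ge z y HG Ga Gb.
case: (HG) => _ GM GV GO.
exists (b^T *m a); split.
  by rewrite -orth_inv ?GO //; apply: GM => //; apply: GV.
rewrite -mulmxA dotv_mul trmxK mulmxBr dotvBr; lra.
Qed.

Lemma eps_lemma (X Y C C' : R) : 0 <= C -> 0 <= C' ->
  (forall eps, 0 < eps -> X <= Y + eps * C + eps ^+ 2 * C') -> X <= Y.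
Proof.
move=> hC hC' H; apply/ler_addgt0Pr => e he.
set t := e / (C + C' + 1).
have tp : 0 < t by rewrite /t divr_gt0 //; lra.
set eps := Num.min 1 t.
have h1 : eps <= 1 by rewrite /eps ge_min lexx.
have h2 : eps <= t by rewrite /eps ge_min lexx orbT.
have h3 : 0 < eps by rewrite /eps lt_min ltr01 tp.
have h4 : eps * (C + C' + 1) <= e.
  by rewrite -ler_pdivlMr; [exact: h2 | lra].
have h5 : eps ^+ 2 * C' <= eps * C'.
  have h6 : 0 <= eps * C' by rewrite mulr_ge0 // ltW.
  by rewrite expr2 -mulrA; apply: ler_piMl.
have := H eps h3; lra.
Qed.

Lemma colmat_tr d n (g : 'I_n -> 'M[R]_d) z w i :
  ((colmat g z)^T *m w) i 0 = dotv (g i *m z i) w.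
Proof. by rewrite mxE /dotv; apply: eq_bigr => k _; rewrite !mxE. Qed.

Lemma lip_core d n (G : set 'M[R]_d) (z : 'I_n -> 'cV[R]_d) M :
  is_subgroup_O G -> 0 <= M ->
  (forall g, (forall i, G (g i)) -> opnorm (colmat g z) <= M) ->
  forall x y, enorm (Phi G z x - Phi G z y) <= M * enorm (x - y).
Proof.
move=> HG M0 HM x y; set w := x - y.
set D := Phi G z x - Phi G z y.
pose B i := (dotv (z i) (z i) + dotv w w) / 2.
suff : dotv D D <= (M * enorm w) ^+ 2.
  rewrite -enormE => h.
  have h1 := enorm_ge0 D; have h2 : 0 <= M * enorm w by rewrite mulr_ge0 // enorm_ge0.
  nra.
apply: (eps_lemma (C := 2 * \sum_i B i) (C' := n%:R)).
- rewrite mulr_ge0 // sumr_ge0 // => i _; rewrite /B divr_ge0 // addr_ge0 ?dotv_ge0 //.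
- exact: ler0n.
move=> eps ep.
have Hi : forall i, exists g, G g /\ (D i 0) ^+ 2 <= (dotv (g *m z i) w) ^+ 2 + 2 * eps * B i + eps ^+ 2.
  move=> i; rewrite /D !mxE.
  case: (HG) => _ _ _ GO.
  have [Dp|Dn] := lerP 0 (maxfilt G (z i) x - maxfilt G (z i) y).
    have [g [Gg h]] := half (z i) x y HG ep; exists g; split => //.
    have [a1 a2] := amgm (g *m z i) w; rewrite dotv_orth ?GO // in a1 a2.
    rewrite /B -/w in h *; nra.
  have [g [Gg h]] := half (z i) y x HG ep; exists g; split => //.
  have [a1 a2] := amgm (g *m z i) w; rewrite dotv_orth ?GO // in a1 a2.
  rewrite -(opprB x y) dotvNr -/w in h; rewrite /B; nra.
have [gf Hgf] := choice Hi.
have Gg : forall i, G (gf i) by move=> i; case: (Hgf i).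
have hA := opnorm_tr (colmat gf z) w.
have hM := HM gf Gg.
have e1 : dotv D D <= \sum_i ((dotv (gf i *m z i) w) ^+ 2 + 2 * eps * B i + eps ^+ 2).
  rewrite /dotv; apply: ler_sum => i _; rewrite -expr2; by case: (Hgf i).
have e2 : \sum_i (dotv (gf i *m z i) w) ^+ 2 = enorm ((colmat gf z)^T *m w) ^+ 2.
  by rewrite enormE /dotv; apply: eq_bigr => i _; rewrite colmat_tr expr2.
rewrite !big_split /= e2 -mulr_sumr sumr_const card_ord in e1.
have h0 := enorm_ge0 ((colmat gf z)^T *m w).
have h5 : enorm ((colmat gf z)^T *m w) <= M * enorm w.
  apply: le_trans hA _; apply: ler_wpM2r => //; exact: enorm_ge0.
have h6 : enorm ((colmat gf z)^T *m w) ^+ 2 <= (M * enorm w) ^+ 2.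
  by rewrite lerXn2r // nnegrE ?mulr_ge0 ?enorm_ge0.
apply: (le_trans e1); rewrite -mulrA mulr_natr; lra.
Qed.


Lemma enorm_orth d (g : 'M[R]_d) v : g^T *m g = 1%:M -> enorm (g *m v) = enorm v.
Proof. by move=> H; rewrite /enorm dotv_orth. Qed.

Lemma Phi0 d n (G : set 'M[R]_d) (z : 'I_n -> 'cV[R]_d) :
  is_subgroup_O G -> Phi G z 0 = 0.
Proof.
move=> HG; apply/matrixP => i j; rewrite !mxE.
case: (HG) => G1 _ _ _.
apply/le_anti/andP; split.
  apply: ge_sup; first by exists (dotv (z i) 0), (z i); [exact: orbit_self | exists 0 => //; exact: orbit_self].
  by move=> r [p _ [q [b _ ->] <-]]; rewrite mulmx0 dotv0r.
by have := mf_ge (z i) 0 HG G1 G1; rewrite mulmx0 dotv0r.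
Qed.

Lemma qdist0 d (G : set 'M[R]_d) (v : 'cV[R]_d) :
  is_subgroup_O G -> qdist G v 0 = enorm v.
Proof.
move=> HG; rewrite /qdist.
suff -> : [set enorm (p - q) | p in Defs.orbit G v & q in Defs.orbit G 0] = [set enorm v] by rewrite inf1.
case: (HG) => _ _ _ GO.
apply/seteqP; split => r.
  by move=> [p [a Ga ->] [q [b _ ->] <-]]; rewrite mulmx0 subr0 /= enorm_orth // GO.
move=> /= ->; exists v; first exact: orbit_self.
by exists 0; [exact: orbit_self | rewrite subr0].
Qed.

Lemma PhiA d n (G : set 'M[R]_d) (z : 'I_n -> 'cV[R]_d) g v :
  is_subgroup_O G -> G (- 1%:M) -> (forall i, G (g i)) ->
  enorm ((colmat g z)^T *m v) <= enorm (Phi G z v).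
Proof.
move=> HG Gm Gg; case: (HG) => G1 GM _ _.
rewrite /enorm ler_sqrt ?dotv_ge0 //.
rewrite /dotv; apply: ler_sum => i _; rewrite colmat_tr mxE.
have h1 := mf_ge (z i) v HG (Gg i) G1.
have h2 := mf_ge (z i) v HG (GM _ _ Gm (Gg i)) G1.
rewrite mul1mx in h1 h2; rewrite -mulmxA mulNmx mul1mx dotvNl in h2.
nra.
Qed.

End H.

Unset Implicit Arguments.

Theorem theorem16 (R : realType) (d n : nat) (G : set 'M[R]_d)
  (z : 'I_n -> 'cV[R]_d) :
  is_subgroup_O G -> closed_orbits G ->
  (lip_Phi G z <= sup_colnorm G z)%E /\
  (G (- 1%:M) -> (0 < d)%N -> lip_Phi G z = sup_colnorm G z).
Proof.
move=> HG _.
have G1 : G 1%:M by case: HG.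
have Sg1 : [set g : 'I_n -> 'M[R]_d | forall i, G (g i)] (fun _ => 1%:M) by [].
have part1 : (lip_Phi G z <= sup_colnorm G z)%E.
  have ub := @ereal_sup_ubound _ [set (opnorm (colmat g z))%:E
            | g in [set g : 'I_n -> 'M[R]_d | forall i, G (g i)]].
  rewrite /sup_colnorm; case Es: (ereal_sup _) => [M| |] in ub *; last 2 first.
  - exact: leey.
  - have := ub _ (ex_intro2 _ _ _ Sg1 erefl); rewrite leeNy_eq => /eqP; discriminate.
  have HM : forall g, (forall i, G (g i)) -> opnorm (colmat g z) <= M.
    by move=> g Gg; have := ub _ (ex_intro2 _ _ _ Gg erefl); rewrite lee_fin.
  have M0 : 0 <= M := le_trans (opnorm_ge0 _) (HM _ Sg1).
  apply: ge_ereal_sup => r [x [y [Hne ->]]]; rewrite lee_fin.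
  set Q := [set enorm (p - q) | p in Defs.orbit G x & q in Defs.orbit G y].
  have Qne : Q !=set0.
    by exists (enorm (x - y)), x; [exact: orbit_self | exists y => //; exact: orbit_self].
  have key : forall p q, Defs.orbit G x p -> Defs.orbit G y q ->
      enorm (Phi G z x - Phi G z y) <= M * enorm (p - q).
    move=> p q [a Ga ->] [b Gb ->].
    by rewrite -(Phi_orbit z x HG Ga) -(Phi_orbit z y HG Gb); apply: lip_core.
  have q0 : 0 <= qdist G x y.
    apply: lb_le_inf => // s [p _ [q _ <-]]; exact: enorm_ge0.
  have [qe|qn] := eqVneq (qdist G x y) 0; first by rewrite qe invr0 mulr0.
  have qp : 0 < qdist G x y by rewrite lt_def qn q0.
  rewrite ler_pdivrMr //.
  have [Me|Mn] := eqVneq M 0.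
    have := key x y (orbit_self x HG) (orbit_self y HG); by rewrite Me !mul0r.
  have Mp : 0 < M by rewrite lt_def Mn M0.
  rewrite -ler_pdivrMl //.
  apply: lb_le_inf => // s [p Hp [q Hq <-]].
  by rewrite ler_pdivrMl // key.
split => // Gm dp.
apply: le_anti; rewrite part1 /=.
apply: ge_ereal_sup => r [g Gg <-].
set A := colmat g z.
have K : forall v : 'cV[R]_d, v != 0 -> ((enorm (A^T *m v) / enorm v)%:E <= lip_Phi G z)%E.
  move=> v vn.
  have : ((enorm (Phi G z v - Phi G z 0) / qdist G v 0)%:E <= lip_Phi G z)%E.
    apply: ereal_sup_ubound; exists v, 0; split => //.
    move=> E; have : Defs.orbit G 0 v by rewrite -E; exact: orbit_self.
    by case=> b _; rewrite mulmx0 => v0; rewrite v0 eqxx in vn.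
  apply: le_trans.
  rewrite lee_fin Phi0 // subr0 qdist0 //.
  by apply: ler_wpM2r; [rewrite invr_ge0 enorm_ge0 | exact: PhiA].
pose v0 : 'cV[R]_d := const_mx 1.
have v0n : v0 != 0.
  apply/eqP => /matrixP /(_ (Ordinal dp) 0); rewrite !mxE => /eqP; by rewrite oner_eq0.
have K0 := K _ v0n.
case El: (lip_Phi G z) => [L| |] in K K0 *; last 2 first.
- exact: leey.
- by move: K0; rewrite leeNy_eq.
rewrite lee_fin.
have L0 : 0 <= L.
  move: K0; rewrite lee_fin; apply: le_trans; rewrite divr_ge0 ?enorm_ge0 //.
have hT : opnorm A <= opnorm A^T.
  apply: opnorm_le => v hv; have := opnorm_tr A^T v; rewrite trmxK => h.
  apply: le_trans h _; apply: ler_piMr => //; exact: opnorm_ge0.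
apply: le_trans hT _; apply: opnorm_le => v hv.
have [ve|vn] := eqVneq v 0; first by rewrite ve mulmx0 enorm0.
have ep : 0 < enorm v.
  rewrite lt_def enorm_ge0 andbT; apply/eqP => /enorm_eq0 h; by rewrite h eqxx in vn.
have := K _ vn; rewrite lee_fin ler_pdivrMr // => h.
apply: le_trans h _; apply: ler_piMr => //.
Qed.
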